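(* Let $\Gamma=\{0=\rho_1<\rho_2<\cdots\}$ be an Arf numerical semigroup and $d_i=\rho_{i+1}-\rho_i$ for $i\ge1$. If $i\ge2$ and $d_i<d_{i-1}$, then \[ |\mathrm{Ap}(\Gamma,d_i)|=i-1+d_i. \]
   Context: A numerical semigroup is a subset of $\mathbb N$ containing $0$, closed under addition, with finite complement; its elements listed increasingly are $\rho_1<\rho_2<\cdots$. $\Gamma$ is Arf if $\rho_i+\rho_j-\rho_k\in\Gamma$ for all $i\ge j\ge k$. For $x\in\mathbb Z$, $\mathrm{Ap}(\Gamma,x)=\{s\in\Gamma: s-x\notin\Gamma\}$. *)

(* Defs.v *)
From mathcomp Require Import all_boot.
Set Implicit Arguments. Unset Strict Implicit. Unset Printing Implicit Defensive.

Definition numerical_semigroup (S : pred nat) : Prop :=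
  [/\ S 0,
      (forall a b, S a -> S b -> S (a + b)) &
      (exists N, forall n, N <= n -> S n)].

(* rho enumerates S increasingly, 1-indexed: S = {rho 1 < rho 2 < ...}.
   (The value rho 0 is irrelevant.) *)
Definition increasing_enum (S : pred nat) (rho : nat -> nat) : Prop :=
  [/\ (forall i, 1 <= i -> S (rho i)),
      (forall i, 1 <= i -> rho i < rho i.+1) &
      (forall s, S s -> exists2 i, 1 <= i & rho i = s)].

Definition Arf (S : pred nat) (rho : nat -> nat) : Prop :=
  forall i j k, 1 <= k -> k <= j -> j <= i -> S (rho i + rho j - rho k).

(* Apery set Ap(S, x) = {s in S : s - x notin S}, for x : nat; since S is a
   subset of N, an integer s - x < 0 is never in S. *)
Definition Ap (S : pred nat) (x : nat) : pred nat :=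
  fun s => S s && ((s < x) || ~~ S (s - x)).

Definition has_card (A : pred nat) (n : nat) : Prop :=
  exists2 l : seq nat, uniq l /\ (forall s, (s \in l) = A s) & size l = n.

(* Main.v *)
Require Import Defs.
From mathcomp Require Import all_boot.
From mathcomp Require Import zify.
Set Implicit Arguments.
Unset Strict Implicit.

Lemma rho_mono (rho : nat -> nat) : (forall i, 1 <= i -> rho i < rho i.+1) ->
  forall a b, 1 <= a -> a < b -> rho a < rho b.
Proof.
move=> H a b Ha; elim: b => // b IH; rewrite ltnS leq_eqVlt => /orP[/eqP<-|hab].
  exact: H.
have hb : 1 <= b by lia.
exact: ltn_trans (IH hab) (H b hb).
Qed.

Lemma rho_le (rho : nat -> nat) : (forall i, 1 <= i -> rho i < rho i.+1) ->
  forall a b, 1 <= a -> 1 <= b -> (rho a <= rho b) = (a <= b).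
Proof.
move=> H a b Ha Hb; case: (ltngtP a b) => h.
- by rewrite ltnW // (rho_mono H Ha h).
- by apply/negbTE; rewrite -ltnNge (rho_mono H Hb h).
- by rewrite h leqnn.
Qed.

Lemma count_split (a b c : pred nat) (s : seq nat) :
  (forall x, (a x : nat) = b x + c x) -> count a s = count b s + count c s.
Proof. move=> H; elim: s => //= x s IH; rewrite IH H; lia. Qed.

Theorem corollary3p4 (S : pred nat) (rho : nat -> nat) (i : nat) :
  numerical_semigroup S ->
  increasing_enum S rho ->
  Arf S rho ->
  2 <= i ->
  rho i.+1 - rho i < rho i - rho i.-1 ->
  has_card (Ap S (rho i.+1 - rho i)) (i - 1 + (rho i.+1 - rho i)).
Proof.
move=> [S0 Sadd [c Hc]] [Srho Hinc Hsurj] Harf Hi Hd.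
set d := rho i.+1 - rho i.
have Hle := rho_le Hinc.
have dpos : 0 < d by have := Hinc i (ltnW Hi); rewrite /d; lia.
have rho1 : rho 1 = 0.
  have [j j1 hj] := Hsurj 0 S0.
  have := Hle 1 j (leqnn 1) j1; rewrite j1 hj; lia.
have key1 : forall k, 1 <= k -> k < i -> ~~ S (rho k + d).
  move=> k k1 ki; apply/negP => /Hsurj [j j1 hj].
  have hkj : k < j.
    rewrite ltnNge -(Hle j k j1 k1) hj; lia.
  have hi1 : 1 <= i.-1 by lia.
  have hki : k <= i.-1 by lia.
  have := Hle k i.-1 k1 hi1; rewrite hki => hk.
  have hji : j <= i.-1.
    have : rho j < rho i by rewrite hj; lia.
    rewrite ltnNge (Hle i j (ltnW Hi) j1); lia.
  have := Harf i.-1 j k k1 (ltnW hkj) hji.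
  case/Hsurj => m m1 hm.
  have h1 : rho i.-1 < rho m by rewrite hm; have := Hle k j k1 j1; lia.
  have h2 : rho m < rho i by rewrite hm; lia.
  move: h1 h2; rewrite !ltnNge (Hle m i.-1 m1 hi1) (Hle i m (ltnW Hi) m1); lia.
have key2 : forall k, i <= k -> S (rho k + d).
  move=> k ik; have := Hinc i (ltnW Hi) => hii.
  case: (ltngtP i k) ik => // h _.
    have := Harf k i.+1 i (ltnW Hi) (leqnSn _) h.
    by have -> : rho k + rho i.+1 - rho i = rho k + d by rewrite /d; lia.
  by rewrite -h /d subnKC ?(ltnW hii) //; apply: Srho; lia.
have keyS : forall t, S t -> ~~ S (t + d) = (t < rho i).
  move=> t /Hsurj [k k1 <-].
  case: (ltnP k i) => h.
    by rewrite key1 // (rho_mono Hinc k1 h).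
  by rewrite key2 // ltnNge (Hle i k (ltnW Hi) k1) h.
have cntS : forall k, 1 <= k -> count S (iota 0 (rho k)) = k.-1.
  elim=> // k IH _; case: (posnP k) => [->|kpos]; first by rewrite rho1.
  have hk := Hinc k kpos.
  rewrite -(subnKC (ltnW hk)) iotaD count_cat IH // add0n.
  rewrite -(subnSK hk) /= Srho //.
  rewrite (@eq_in_count _ _ pred0); first by rewrite count_pred0; lia.
  move=> x; rewrite mem_iota => /andP [h1 h2] /=; apply/negbTE/negP.
  case/Hsurj => j j1 hj.
  have : rho k < rho j by lia.
  have : rho j < rho k.+1 by lia.
  rewrite !ltnNge (Hle k.+1 j _ j1) // (Hle j k j1 kpos); lia.
set M := c + rho i.
set Nb := M + d.
exists (filter (Ap S d) (iota 0 Nb)).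
  split; first by rewrite filter_uniq // iota_uniq.
  move=> s; rewrite mem_filter mem_iota add0n leq0n /=.
  case A: (Ap S d s) => //=; apply/negPn/negP; rewrite -leqNgt => h.
  move: A; rewrite /Ap.
  have -> : S (s - d) by apply: Hc; rewrite /Nb /M in h; lia.
  have -> : s < d = false by apply/negbTE; rewrite -leqNgt; rewrite /Nb /M in h; lia.
  by rewrite andbF.
rewrite size_filter.
have E1 : count S (iota 0 Nb) = count (Ap S d) (iota 0 Nb)
      + count (fun t => S t && S (t + d)) (iota 0 M).
  rewrite (count_split (b := Ap S d) (c := fun s => (d <= s) && S s && S (s - d))).
    congr (_ + _).
    rewrite /Nb addnC iotaD count_cat add0n.
    rewrite (@eq_in_count _ _ pred0); last first.
      by move=> x; rewrite mem_iota => /andP [_ h] /=; rewrite leqNgt h.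
    rewrite count_pred0 add0n -[d]addn0 iotaDl count_map addn0.
    apply: eq_count => t /=; rewrite leq_addr /= addKn addnC.
    by rewrite andbC.
  move=> y; rewrite /Ap; case: (S y); last by rewrite andbF.
  case: (ltnP y d) => //= h; by case: (S (y - d)).
have E2 : count S (iota 0 Nb) = count S (iota 0 M) + d.
  rewrite /Nb iotaD count_cat add0n; congr (_ + _).
  rewrite (@eq_in_count _ _ predT); first by rewrite count_predT size_iota.
  by move=> x; rewrite mem_iota => /andP [h _] /=; apply: Hc; rewrite /M in h; lia.
have E3 : count S (iota 0 M) = count (fun t => S t && S (t + d)) (iota 0 M) + i.-1.
  rewrite (count_split (b := fun t => S t && S (t + d)) (c := fun t => S t && ~~ S (t + d))); last first.
    by move=> x /=; case: (S x); case: (S (x + d)).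
  congr (_ + _).
  rewrite -(cntS i (ltnW Hi)).
  have hM : rho i <= M by rewrite /M leq_addl.
  rewrite -(subnKC hM) iotaD count_cat add0n.
  rewrite (@eq_in_count _ _ pred0 (iota (rho i) _)); last first.
    move=> x; rewrite mem_iota => /andP [h _] /=.
    case Sx: (S x) => //=; rewrite keyS // ltnNge h //.
  rewrite count_pred0 addn0; apply: eq_in_count => x; rewrite mem_iota => /andP [_ h] /=.
  case Sx: (S x) => //=; by rewrite keyS // h.
have : count (Ap S d) (iota 0 Nb) = i.-1 + d by lia.
move=> ->; lia.
Qed.
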